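(* Let $G$ be a finite simple graph with edge weight function $w$ and vertex weight function $w_1$, let $\theta$ be a real number and let $u\in V(G)$. If $u$ is $(\theta,w,w_1)$-special, then $u$ is $(\theta,w,w_1)$-positive.
   Context: An edge weight function $w$ assigns a nonzero complex number to each edge; a vertex weight function $w_1$ assigns a real number (possibly $0$) to each vertex; subgraphs carry restricted weights; $G\setminus u$ deletes $u$ and its incident edges. For $A\subseteq E(G)$, $w(A)=\prod_{e\in A}w(e)$. $\mu_w(G,x)=\sum_{M}(-1)^{|M|}|w(M)|^2x^{n-2|M|}$ over all matchings $M$ (including empty). $\eta_{(w,w_1)}(G,x)=\sum_{S\subseteq V(G)}(-1)^{|V(G)\setminus S|}\big(\prod_{y\in V(G)\setminus S}w_1(y)\big)\mu_w(G[S],x)$ with $G[S]$ the induced subgraph; $\mu_w,\eta_{(w,w_1)}$ of the empty graph equal $1$. $\mathrm{mult}(\theta,H)$ is the multiplicity of $\theta$ as a root of $\eta_{(w,w_1)}(H,x)$ ($0$ if not a root). A vertex $v$ of $H$ is $(\theta,w,w_1)$-essential if $\mathrm{mult}(\theta,H\setminus v)=\mathrm{mult}(\theta,H)-1$ and $(\theta,w,w_1)$-positive if $\mathrm{mult}(\theta,H\setminus v)=\mathrm{mult}(\theta,H)+1$; $v$ is $(\theta,w,w_1)$-special if it is not essential but is adjacent to some essential vertex. *)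

(* Defs.v *)
From HB Require Import structures.
From mathcomp Require Import all_boot all_order all_algebra.
From mathcomp Require Import complex.
Set Implicit Arguments. Unset Strict Implicit. Unset Printing Implicit Defensive.
Import Order.TTheory GRing.Theory Num.Theory.
Local Open Scope ring_scope.
Local Open Scope complex_scope.

(* Subgraphs are given by vertex subsets S : {set T} (induced
   subgraph G[S]); edges are two-element sets [set x; y] with adj x y.
   Edge weights: w : {set T} -> R[i] (only its values on edges matter);
   vertex weights: w1 : T -> R. *)

Section WeightedGraphPolys.
Variables (R : rcfType) (T : finType) (adj : rel T).
Variable (w : {set T} -> R[i]) (w1 : T -> R).

Definition simple_graph := symmetric adj /\ irreflexive adj.

Definition edge_weight_ok := forall x y, adj x y -> w [set x; y] != 0.

Definition is_edge_in (S : {set T}) (e : {set T}) : bool :=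
  [exists x, [exists y, [&& x \in S, y \in S, adj x y & e == [set x; y]]]].

Definition matching_in (S : {set T}) (M : {set {set T}}) : bool :=
  [forall e in M, is_edge_in S e] &&
  [forall e in M, forall f in M, (e != f) ==> [disjoint e & f]].

Definition wM (M : {set {set T}}) : R[i] := \prod_(e in M) w e.

Definition mu_w (S : {set T}) : {poly R[i]} :=
  \sum_(M : {set {set T}} | matching_in S M)
    ((-1) ^+ #|M| * `|wM M| ^+ 2) *: 'X^(#|S| - 2 * #|M|).

Definition eta_w (S : {set T}) : {poly R[i]} :=
  \sum_(S' : {set T} | S' \subset S)
    ((-1) ^+ #|S :\: S'| * \prod_(y in S :\: S') (w1 y)%:C) *: mu_w S'.

Definition mult (theta : R) (S : {set T}) : nat := mup (theta%:C) (eta_w S).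

Definition essential (theta : R) (S : {set T}) (v : T) : Prop :=
  v \in S /\ (mult theta (S :\ v)).+1 = mult theta S.

Definition positive (theta : R) (S : {set T}) (v : T) : Prop :=
  v \in S /\ mult theta (S :\ v) = (mult theta S).+1.

Definition special (theta : R) (S : {set T}) (v : T) : Prop :=
  v \in S /\ ~ essential theta S v /\
  exists2 u, u \in S /\ adj v u & essential theta S u.

End WeightedGraphPolys.

(* Main.v *)
Require Import Defs.
From HB Require Import structures.
From mathcomp Require Import all_boot all_order all_algebra.
From mathcomp Require Import complex ring lra zify.
Set Implicit Arguments. Unset Strict Implicit. Unset Printing Implicit Defensive.
Import Order.TTheory GRing.Theory Num.Theory.
Local Open Scope ring_scope.
Local Open Scope complex_scope.
Section Good.
Variable R : realFieldType.
Variable th : R.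
Local Notation e := ('X - th%:P).

Definition goodn (q : {poly R}) (n : nat) :=
  exists2 s : {poly R}, q = e ^+ (2 * n) * s & 0 < s.[th].
Definition good q := q = 0 \/ exists n, goodn q n.

Lemma hornerXsubC_exp k s : (e ^+ k * s).[th] = (0:R) ^+ k * s.[th].
Proof. by rewrite hornerM horner_exp hornerXsubC subrr. Qed.

Lemma mupXs k s : s.[th] != 0 -> mup th (e ^+ k * s) = k.
Proof.
move=> hs; rewrite mupMl; first by rewrite mup_XsubCX eqxx.
by rewrite /root.
Qed.

Lemma goodnD q1 q2 n1 n2 : goodn q1 n1 -> goodn q2 n2 ->
  goodn (q1 + q2) (minn n1 n2).
Proof.
wlog le12 : q1 q2 n1 n2 / (n1 <= n2)%N.
  move=> H g1 g2; case: (boolP (n1 <= n2)%N) => h; first by apply: H.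
  by rewrite addrC minnC; apply: H => //; apply: ltnW; rewrite ltnNge.
move=> [s1 -> p1] [s2 -> p2]; rewrite (minn_idPl le12).
exists (s1 + e ^+ (2 * (n2 - n1)) * s2).
  by rewrite mulrDr mulrA -exprD -mulnDr subnKC.
rewrite hornerD hornerXsubC_exp; apply: (lt_le_trans p1).
by rewrite lerDl; apply: mulr_ge0; [apply: exprn_ge0 | apply: ltW].
Qed.

Lemma good0 : good 0. Proof. by left. Qed.

Lemma goodD q1 q2 : good q1 -> good q2 -> good (q1 + q2).
Proof.
case=> [->|[n1 g1]]; first by rewrite add0r.
case=> [->|[n2 g2]]; first by rewrite addr0; right; exists n1.
by right; exists (minn n1 n2); apply: goodnD.
Qed.

Lemma goodZ c q : 0 <= c -> good q -> good (c *: q).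
Proof.
rewrite le0r => /orP[/eqP->|c0]; first by rewrite scale0r; left.
case=> [->|[n [s -> ps]]]; first by rewrite scaler0; left.
right; exists n; exists (c *: s); first by rewrite scalerAr.
by rewrite hornerZ mulr_gt0.
Qed.

Lemma good_sum (I : Type) (r : seq I) (P : pred I) (F : I -> {poly R}) :
  (forall i, P i -> good (F i)) -> good (\sum_(i <- r | P i) F i).
Proof. by move=> H; apply: big_ind => //; [exact: good0 | exact: goodD]. Qed.

Lemma goodn_sq p : p != 0 -> goodn (p * p) (mup th p).
Proof.
move=> p0; have [m [r /implyP /(_ p0) hr ->]] := multiplicity_XsubC p th.
have r0 : r.[th] != 0 by [].
rewrite mupMr // ?mup_XsubCX ?eqxx //.
exists (r * r); first by rewrite mul2n -addnn exprD; ring.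
by rewrite hornerM -expr2 lt_def sqr_ge0 andbT sqrf_eq0.
Qed.
End Good.
Lemma W_alg (R : comNzRingType) (E D1 D2 a a' b b' X Y: R) (k m : nat) :
  E * (D1 * b) = X * b * m%:R -> E * (D2 * a) = Y * a * k%:R -> 
  E * ((Y * a) * (D1 * b + X * b') - (D2 * a + Y * a') * (X * b))
  = Y * X * ((m%:R - k%:R) * (a * b) + E * (a * b' - a' * b)).
Proof.
move=> h1 h2.
transitivity (Y * a * (E * (D1 * b)) + E * (Y * a * (X * b'))
   - (E * (D2 * a)) * (X * b) - E * (Y * a') * (X * b)); first ring.
rewrite h1 h2; ring.
Qed.

Section Good2.
Variable R : realFieldType.
Variable th : R.
Local Notation e := ('X - th%:P).

Lemma goodn_mup q n : goodn th q n -> q != 0 /\ mup th q = (2 * n)%N.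
Proof.
move=> [s -> ps]; have s0 : s.[th] != 0 by rewrite gt_eqF.
rewrite mupXs // mulf_neq0 ?expf_neq0 ?polyXsubC_eq0 //.
by apply: contraNneq s0 => ->; rewrite horner0.
Qed.

Lemma good_key p q : p != 0 -> good th q ->
  exists2 n, goodn th (p * p + q) n & (n <= mup th p)%N.
Proof.
move=> p0 [->|[n gq]]; first by rewrite addr0; exists (mup th p) => //; apply: goodn_sq.
exists (minn (mup th p) n); first by apply: goodnD => //; apply: goodn_sq.
exact: geq_minl.
Qed.

Lemma eW k a : e * ((e ^+ k)^`() * a) = e ^+ k * a *+ k.
Proof.
rewrite deriv_exp derivXsubC mul1r; case: k => [|k] /=; first by rewrite !mulr0n mul0r mulr0.
by rewrite mulrnAl mulrnAr mulrA -exprS.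
Qed.

Lemma W_mup a b k m : a.[th] != 0 -> b.[th] != 0 -> k != m ->
  mup th ((e ^+ k * a) * (e ^+ m * b)^`() - (e ^+ k * a)^`() * (e ^+ m * b))
  = (k + m).-1.
Proof.
move=> a0 b0 km.
set W := (X in mup th X).
have eWE : e * W = e ^+ (k + m) * ((m%:R - k%:R) * (a * b) + e * (a * b^`() - a^`() * b)).
  rewrite /W !derivM exprD; apply: (@W_alg _ e _ _ a _ b _ (e ^+ m) (e ^+ k)); by rewrite eW mulr_natr.
have ev : ((m%:R - k%:R) * (a * b) + e * (a * b^`() - a^`() * b)).[th] != 0.
  rewrite hornerD !hornerM hornerXsubC subrr mul0r addr0 !hornerE.
  rewrite !mulf_neq0 // -!polyC_natr !hornerC subr_eq0 eqr_nat eq_sym //.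
have W0 : W != 0.
  apply: contraNneq ev => W0; move: eWE; rewrite W0 mulr0 => /esym /eqP.
  by rewrite mulf_eq0 expf_eq0 polyXsubC_eq0 andbF /= => /eqP->; rewrite horner0.
have := @mupXs _ th (k + m) _ ev; rewrite -eWE mupM ?polyXsubC_eq0 //.
by rewrite (mup_XsubCX 1) eqxx add1n => <-.
Qed.
Lemma goodnZ c q n : 0 < c -> goodn th q n -> goodn th (c *: q) n.
Proof.
move=> c0 [s -> ps]; exists (c *: s); first by rewrite scalerAr.
by rewrite hornerZ mulr_gt0.
Qed.

Lemma good_keyZ c p q : 0 < c -> p != 0 -> good th q ->
  exists2 n, goodn th (c *: (p * p) + q) n & (n <= mup th p)%N.
Proof.
move=> c0 p0 [->|[n gq]].
  by rewrite addr0; exists (mup th p) => //; apply: goodnZ => //; apply: goodn_sq.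
exists (minn (mup th p) n); first by apply: goodnD => //; apply: goodnZ => //; apply: goodn_sq.
exact: geq_minl.
Qed.

Lemma decomp q : q != 0 -> exists2 r, q = e ^+ (mup th q) * r & r.[th] != 0.
Proof.
move=> q0; have [m [r /implyP /(_ q0) hr qE]] := multiplicity_XsubC q th.
exists r => //; rewrite qE mupMr // mup_XsubCX eqxx mulrC //.
Qed.
End Good2.
Lemma ar_ring (R : comNzRingType) (E F r1 r2 : R) : E * r1 - r2 * (E * F) = E * (r1 - F * r2).
Proof. ring. Qed.
Lemma ar_lower k m n : (k + m).-1 = (2 * n)%N -> (n <= k)%N -> k != m -> (m <= k.+1)%N.
Proof. move=> h1 h2 /eqP h3; lia. Qed.
Lemma ar_pred k x : (k <= x.+1)%N -> (k.-1 <= x)%N.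
Proof. lia. Qed.
Lemma ar_up k m : (k.-1 <= m)%N -> (k <= m.+1)%N.
Proof. lia. Qed.
Lemma ar1 m k : (m <= k.+1)%N -> k.+1 != m -> (k <= m.+1)%N -> k = m \/ k = m.+1.
Proof. move=> h1 /eqP h2 h3; lia. Qed.
Lemma ar7 m k mv : k = m -> mv.+1 = m -> (k + mv)%N = (2 * m).-1.
Proof. lia. Qed.
Lemma ar3 m k l : k = m -> (k <= l.+1)%N -> ((2 * m).-1 <= m + l)%N.
Proof. lia. Qed.
Lemma ar4 m n l mv : ((2 * m).-1 <= 2 * n)%N -> (n <= l)%N -> mv.+1 = m -> (m <= l)%N.
Proof. lia. Qed.
Lemma ar6 m mv : mv.+1 = m -> (2 * m).-1.+1 = (m + m)%N.
Proof. lia. Qed.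
Lemma ar8 m n mv : mv.+1 = m -> (2 * n)%N = (2 * m).-1 -> False.
Proof. lia. Qed.

Lemma setD1C (T : finType) (A : {set T}) x y : A :\ x :\ y = A :\ y :\ x.
Proof. by rewrite !setDDl setUC. Qed.

Section Abstract.
Variables (R : realFieldType) (T : finType) (adj : rel T).
Variables (p : {set T} -> {poly R}) (a : T -> R) (c : T -> T -> R) (th : R).
Hypothesis adj_irr : irreflexive adj.
Hypothesis c_pos : forall x y, adj x y -> 0 < c x y.
Hypothesis p_rec : forall (S : {set T}) u, u \in S -> p S =
  ('X - (a u)%:P) * p (S :\ u) - \sum_(z in S :\ u | adj u z) c u z *: p (S :\ u :\ z).
Hypothesis p_neq0 : forall S, p S != 0.

Local Notation e := ('X - th%:P).

Definition Wf (S : {set T}) u := p (S :\ u) * (p S)^`() - (p (S :\ u))^`() * p S.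
Definition Df (S : {set T}) u v := p (S :\ u) * p (S :\ v) - p S * p (S :\ u :\ v).

Lemma W_rec (S : {set T}) u : u \in S -> Wf S u =
  p (S :\ u) * p (S :\ u) + \sum_(z in S :\ u | adj u z) c u z *: Wf (S :\ u) z.
Proof.
move=> uS; rewrite /Wf (p_rec uS).
set H := S :\ u.
have -> : \sum_(z in H | adj u z) c u z *: (p (H :\ z) * (p H)^`() - (p (H :\ z))^`() * p H)
  = (\sum_(z in H | adj u z) c u z *: p (H :\ z)) * (p H)^`()
    - (\sum_(z in H | adj u z) c u z *: (p (H :\ z))^`()) * p H.
  rewrite !mulr_suml -sumrB; apply: eq_bigr => z _.
  by rewrite scalerBr -!scalerAl.
rewrite derivB derivM derivXsubC mul1r raddf_sum /=.
have -> : \sum_(z in H | adj u z) (c u z *: p (H :\ z))^`() =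
   \sum_(z in H | adj u z) c u z *: (p (H :\ z))^`().
  by apply: eq_bigr => z _; rewrite derivZ.
move: (\sum_(z in H | adj u z) c u z *: p (H :\ z)) => S0.
move: (\sum_(z in H | adj u z) c u z *: (p (H :\ z))^`()) => S1.
move: (p H) (p H)^`() => P P'.
ring.
Qed.

Lemma D_rec (S : {set T}) u v : u \in S -> v \in S -> u != v -> Df S u v =
  (if adj u v then c u v *: (p (S :\ u :\ v) * p (S :\ u :\ v)) else 0)
  + \sum_(z in S :\ u :\ v | adj u z) c u z *: Df (S :\ u) z v.
Proof.
move=> uS vS uv.
have uSv : u \in S :\ v by rewrite in_setD1 uv.
rewrite /Df (p_rec uS) [p (S :\ v)](p_rec uSv) [S :\ v :\ u]setD1C.
set H := S :\ u.
have -> : \sum_(z in H :\ v | adj u z) c u z *: (p (H :\ z) * p (H :\ v) - p H * p (H :\ z :\ v))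
  = (\sum_(z in H :\ v | adj u z) c u z *: p (H :\ z)) * p (H :\ v)
    - p H * (\sum_(z in H :\ v | adj u z) c u z *: p (H :\ v :\ z)).
  rewrite mulr_suml mulr_sumr -sumrB; apply: eq_bigr => z _.
  by rewrite scalerBr -scalerAl -scalerAr setD1C.
have vH : v \in H by rewrite in_setD1 eq_sym uv.
have -> : \sum_(z in H | adj u z) c u z *: p (H :\ z) =
   (if adj u v then c u v *: p (H :\ v) else 0) +
   \sum_(z in H :\ v | adj u z) c u z *: p (H :\ z).
  case: ifP => auv.
    rewrite (bigD1 v) /=; last by rewrite vH auv.
    congr (_ + _); apply: eq_bigl => z; rewrite in_setD1.
    by case: (z == v); rewrite ?andbF ?andbT.
  rewrite add0r; apply: eq_bigl => z; rewrite in_setD1.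
  by case: eqP => [->|]; rewrite ?auv ?andbF.
move: (\sum_(z in H :\ v | adj u z) c u z *: p (H :\ z)) => S0.
move: (\sum_(z in H :\ v | adj u z) c u z *: p (H :\ v :\ z)) => S1.
case: ifP => _; last by rewrite add0r; move: (p H) (p (H :\ v)) => P Q; ring.
rewrite -!mul_polyC; move: (p H) (p (H :\ v)) (c u v)%:P => P Q C; ring.
Qed.

Lemma W_good (S : {set T}) u : u \in S -> good th (Wf S u).
Proof.
move: {2}#|S| (leqnn #|S|) => n; elim: n S u => [|n IH] S u.
  by rewrite leqn0 cards_eq0 => /eqP ->; rewrite inE.
move=> hS uS; rewrite (W_rec uS); apply: goodD.
  by right; exists (mup th (p (S :\ u))); apply: goodn_sq.
apply: good_sum => z /andP [zH az]; apply: goodZ; first exact: ltW (c_pos az).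
apply: IH zH; move: hS; rewrite (cardsD1 u S) uS add1n ltnS //.
Qed.

Lemma D_good (S : {set T}) u v : u \in S -> v \in S -> u != v -> good th (Df S u v).
Proof.
move: {2}#|S| (leqnn #|S|) => n; elim: n S u v => [|n IH] S u v.
  by rewrite leqn0 cards_eq0 => /eqP ->; rewrite inE.
move=> hS uS vS uv; rewrite (D_rec uS vS uv); apply: goodD.
  case: ifP => auv; last exact: good0.
  apply: goodZ; first exact: ltW (c_pos auv).
  by right; exists (mup th (p (S :\ u :\ v))); apply: goodn_sq.
apply: good_sum => z /andP [zH az]; apply: goodZ; first exact: ltW (c_pos az).
move: zH; rewrite in_setD1 => /andP [zv zH].
apply: IH => //.
- by move: hS; rewrite (cardsD1 u S) uS add1n ltnS.
- by rewrite in_setD1 eq_sym uv vS.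
Qed.


Local Notation mu S := (mup th (p S)).

Lemma mult_lower (S : {set T}) u : u \in S -> (mu S <= (mu (S :\ u)).+1)%N.
Proof.
move=> uS; set k := mu (S :\ u); set m := mu S.
case: (eqVneq k m) => [<-|km]; first exact: leqnSn.
have [al hal al0] := decomp th (p_neq0 (S :\ u)).
have [be hbe be0] := decomp th (p_neq0 S).
have hW : mup th (Wf S u) = (k + m).-1.
  by rewrite /Wf hal hbe; apply: W_mup.
have [n gn nk] : exists2 n, goodn th (Wf S u) n & (n <= k)%N.
  rewrite (W_rec uS); apply: good_key => //.
  apply: good_sum => z /andP [zH az]; apply: goodZ; first exact: ltW (c_pos az).
  exact: W_good.
have [_ hn] := goodn_mup gn.
rewrite hn in hW; exact: ar_lower (esym hW) nk km.
Qed.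

Lemma mult_upper (S : {set T}) u : u \in S -> (mu (S :\ u) <= (mu S).+1)%N.
Proof.
move=> uS; set k := mu (S :\ u).
have d : e ^+ k.-1 %| p S.
  rewrite (p_rec uS); apply: dvdp_sub.
    by apply: dvdp_mull; rewrite -mup_geq ?p_neq0 // leq_pred.
  apply: (big_ind (fun q => e ^+ k.-1 %| q)); [exact: dvdp0 | by move=> x y; apply: dvdp_add | move=> z /andP [zH _]].
  rewrite -mul_polyC dvdp_mull // -mup_geq ?p_neq0 //.
  have := mult_lower zH; rewrite -/k; exact: ar_pred.
rewrite -mup_geq ?p_neq0 // in d; exact: ar_up d.
Qed.

Lemma special_positive (S : {set T}) u v : u \in S -> v \in S -> adj u v ->
  (mu (S :\ v)).+1 = mu S -> (mu (S :\ u)).+1 != mu S ->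
  mu (S :\ u) = (mu S).+1.
Proof.
move=> uS vS auv ess nes.
have uv : u != v by apply: contraTneq auv => ->; rewrite adj_irr.
have vH : v \in S :\ u by rewrite in_setD1 eq_sym uv.
have lo := mult_lower uS; have up := mult_upper uS.
have lo2 := mult_lower vH.
move: ess nes lo up lo2.
set m := mu S; set k := mu (S :\ u); set mv := mu (S :\ v); set l := mu (S :\ u :\ v).
move=> ess nes lo up lo2.
have [km|km] := ar1 lo nes up; last by [].
exfalso.
have [n gn nl] : exists2 n, goodn th (Df S u v) n & (n <= l)%N.
  rewrite (D_rec uS vS uv) auv; apply: good_keyZ => //; first exact: c_pos.
  apply: good_sum => z /andP [zH az]; apply: goodZ; first exact: ltW (c_pos az).
  move: zH; rewrite in_setD1 => /andP [zv zH].
  by apply: D_good => //.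
have [D0 hn] := goodn_mup gn.
set j := (2 * m).-1.
set q1 := p (S :\ u) * p (S :\ v).
set q2 := p S * p (S :\ u :\ v).
have hq1 : mup th q1 = j by rewrite mupM ?p_neq0 //; exact: (ar7 km ess).
have hq2 : mup th q2 = (m + l)%N by rewrite mupM ?p_neq0.
have q10 : q1 != 0 by rewrite mulf_neq0 ?p_neq0.
have q20 : q2 != 0 by rewrite mulf_neq0 ?p_neq0.
have d1 : e ^+ j %| q1 by rewrite -mup_geq // hq1.
have d2 : e ^+ j %| q2 by rewrite -mup_geq // hq2; exact: (ar3 km lo2).
have dD : e ^+ j %| Df S u v by apply: dvdp_sub.
rewrite -mup_geq // hn in dD.
have lm : (m <= l)%N by exact: ar4 dD nl ess.
have d3 : e ^+ j.+1 %| q2 by rewrite -mup_geq // hq2 /j (ar6 ess) leq_add2l.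
have [r1 hr1 r10] := decomp th q10.
have /dvdpP [r2 hr2] := d3.
rewrite hq1 in hr1.
have DE : Df S u v = e ^+ j * (r1 - e * r2).
  rewrite /Df -/q1 -/q2 hr2 hr1 exprSr.
  by apply: ar_ring.
have : mup th (Df S u v) = j.
  rewrite DE mupXs // hornerD hornerN hornerM hornerXsubC subrr mul0r subr0 //.
rewrite hn; exact: ar8 ess.
Qed.
End Abstract.
Section Conc.
Variables (R : rcfType) (T : finType) (adj : rel T).
Variables (w : {set T} -> R[i]) (w1 : T -> R).
Hypothesis sym : symmetric adj.
Hypothesis irr : irreflexive adj.

Lemma edgeP (S e : {set T}) :
  reflect (exists x y, [/\ x \in S, y \in S, adj x y & e = [set x; y]])
          (is_edge_in adj S e).
Proof.
apply: (iffP existsP) => [[x /existsP [y /and4P [xS yS axy /eqP ->]]]|[x [y [xS yS axy ->]]]].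
  by exists x, y.
by exists x; apply/existsP; exists y; rewrite xS yS axy eqxx.
Qed.

Lemma pair_eq (x y u z : T) : x != y -> [set x; y] = [set u; z] ->
  (x = u /\ y = z) \/ (x = z /\ y = u).
Proof.
move=> xy E.
have xu : x \in [set u; z] by rewrite -E !inE eqxx.
have yu : y \in [set u; z] by rewrite -E !inE eqxx orbT.
have ux : u \in [set x; y] by rewrite E !inE eqxx.
have zx : z \in [set x; y] by rewrite E !inE eqxx orbT.
move: xu yu ux zx; rewrite !inE.
case/orP=> /eqP xe; case/orP=> /eqP ye; subst; rewrite ?eqxx //=.
- by move: xy; rewrite eqxx.
- by left.
- by right.
- by move: xy; rewrite eqxx.
Qed.

Lemma edge_sub (S e : {set T}) : is_edge_in adj S e -> e \subset S.
Proof.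
case/edgeP=> x [y [xS yS _ ->]]; apply/subsetP => t; rewrite !inE.
by case/orP=> /eqP ->.
Qed.

Lemma edge_card (S e : {set T}) : is_edge_in adj S e -> #|e| = 2%N.
Proof.
case/edgeP=> x [y [xS yS axy ->]]; rewrite cards2.
by case: eqP => // xy; move: axy; rewrite xy irr.
Qed.

Lemma matchingP (S : {set T}) (M : {set {set T}}) : reflect
  ((forall e, e \in M -> is_edge_in adj S e) /\
   (forall e f, e \in M -> f \in M -> e != f -> [disjoint e & f]))
  (matching_in adj S M).
Proof.
apply: (iffP andP) => [[/forall_inP h1 /forall_inP h2]|[h1 h2]].
  split=> // e f eM fM ef; have /forall_inP := h2 e eM; move/(_ f fM).
  by rewrite ef.
split; apply/forall_inP => // e eM; apply/forall_inP => f fM.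
by apply/implyP; apply: h2.
Qed.

Lemma matching_card (S : {set T}) (M : {set {set T}}) : matching_in adj S M -> (2 * #|M| <= #|S|)%N.
Proof.
case/matchingP=> h1 h2.
have tM : trivIset M by apply/trivIsetP => A B AM BM AB; apply: h2.
have s0 : set0 \notin M.
  by apply/negP => /h1 /edge_card; rewrite cards0.
have := @card_uniform_partition _ 2 M (cover M).
rewrite /partition eqxx tM s0 /= => /(_ (fun X XM => edge_card (h1 X XM)) isT).
move=> hc; rewrite mulnC -hc; apply: subset_leq_card.
by apply/bigcupsP => e eM; apply: edge_sub; apply: h1.
Qed.
End Conc.
Section Conc2.
Variables (R : rcfType) (T : finType) (adj : rel T).
Variables (w : {set T} -> R[i]) (w1 : T -> R).
Hypothesis sym : symmetric adj.
Hypothesis irr : irreflexive adj.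

Lemma edge_in_sub (S1 S2 e : {set T}) : S1 \subset S2 ->
  is_edge_in adj S1 e -> is_edge_in adj S2 e.
Proof.
move=> sub /edgeP [x [y [xS yS axy ->]]]; apply/edgeP; exists x, y.
by split => //; apply: (subsetP sub).
Qed.

Lemma match_noU (S : {set T}) u (M : {set {set T}}) : u \in S ->
  (matching_in adj S M && (u \notin cover M)) = matching_in adj (S :\ u) M.
Proof.
move=> uS; apply/idP/idP.
  case/andP => /matchingP [h1 h2] uc; apply/matchingP; split => // e eM.
  have ue : u \notin e.
    apply: contra uc => ue; apply/bigcupP; by exists e.
  have := h1 e eM; case/edgeP => x [y [xS yS axy ee]].
  apply/edgeP; exists x, y; split => //.
  - by rewrite in_setD1 xS andbT; apply: contraNneq ue => <-; rewrite ee !inE eqxx.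
  - by rewrite in_setD1 yS andbT; apply: contraNneq ue => <-; rewrite ee !inE eqxx orbT.
case/matchingP => h1 h2; apply/andP; split.
  apply/matchingP; split => // e eM; apply: edge_in_sub (h1 e eM).
  exact: subsetDl.
apply/bigcupP => [[e eM ue]].
by have := subsetP (edge_sub (h1 e eM)) u ue; rewrite setD11.
Qed.

Definition pM u (M : {set {set T}}) := odflt u [pick z | [set u; z] \in M].

Lemma pM_spec (S : {set T}) u (M : {set {set T}}) : matching_in adj S M -> u \in cover M ->
  [/\ [set u; pM u M] \in M, pM u M \in S :\ u & adj u (pM u M)].
Proof.
case/matchingP => h1 h2 /bigcupP [e eM ue].
have [z0 hz0] : exists z0, [set u; z0] \in M.
  have := h1 e eM; case/edgeP => x [y [_ _ _ ee]].
  move: ue; rewrite ee !inE => /orP [] /eqP ux.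
    by exists y; rewrite ux -ee.
  by exists x; rewrite ux setUC -ee.
rewrite /pM; case: pickP => [z hz|]; last by move/(_ z0); rewrite hz0.
rewrite /=; have := h1 _ hz; case/edgeP => x [y [xS yS axy ee]].
have xy : x != y by apply: contraTneq axy => ->; rewrite irr.
case: (pair_eq xy (esym ee)) => [[xu yz]|[xz yu]]; subst.
  by rewrite in_setD1 yS andbT eq_sym.
by rewrite in_setD1 xS andbT sym.
Qed.

Section Fixz.
Variables (S : {set T}) (u z : T).
Hypotheses (uS : u \in S) (zS : z \in S :\ u) (auz : adj u z).
Local Notation e0 := [set u; z].

Lemma uz : u != z. Proof. by apply: contraTneq zS => <-; rewrite setD11. Qed.

Lemma noUZ (M : {set {set T}}) e : matching_in adj (S :\ u :\ z) M -> e \in M ->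
  u \notin e /\ z \notin e.
Proof.
case/matchingP => h1 _ eM; have sub := subsetP (edge_sub (h1 e eM)).
by split; apply/negP => /sub; rewrite !in_setD1 ?eqxx ?andbF // eq_sym (negbTE uz).
Qed.

Lemma e0_notin (M : {set {set T}}) : matching_in adj (S :\ u :\ z) M -> e0 \notin M.
Proof.
move=> hM; apply/negP => /(noUZ hM) [h _]; by rewrite !inE eqxx in h.
Qed.

Lemma e0_edge : is_edge_in adj S e0.
Proof. apply/edgeP; exists u, z; split => //; by move: zS; rewrite in_setD1 => /andP []. Qed.

Lemma match_add (M : {set {set T}}) : matching_in adj (S :\ u :\ z) M ->
  matching_in adj S (e0 |: M).
Proof.
move=> hM; have := hM; case/matchingP => h1 h2; apply/matchingP; split.
  move=> e; rewrite in_setU1 => /orP [/eqP ->|eM]; first exact: e0_edge.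
  apply: edge_in_sub (h1 e eM); apply: subset_trans (subsetDl _ _) (subsetDl _ _).
have dj f : f \in M -> [disjoint e0 & f].
  move=> fM; have [nu nz] := noUZ hM fM; rewrite disjoint_sym.
  apply/pred0P => t /=; apply/negP => /andP [tf]; rewrite !inE.
  by case/orP => /eqP et; subst; [rewrite tf in nu | rewrite tf in nz].
move=> e f; rewrite !in_setU1 => /orP [/eqP ->|eM] /orP [/eqP ->|fM]; rewrite ?eqxx //.
- by move=> _; apply: dj.
- by move=> _; rewrite disjoint_sym; apply: dj.
- by apply: h2.
Qed.

Lemma pM_add (M : {set {set T}}) : matching_in adj (S :\ u :\ z) M -> pM u (e0 |: M) = z.
Proof.
move=> hM; rewrite /pM; case: pickP => [z' hz'|]; last by move/(_ z); rewrite setU11.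
move: hz'; rewrite in_setU1 => /orP [/eqP E|eM] /=.
  have : z' \in [set u; z] by rewrite -E !inE eqxx orbT.
  rewrite !inE => /orP [/eqP zu|/eqP //]; subst z'.
  have : z \in [set u; u] by rewrite E !inE eqxx orbT.
  by rewrite !inE orbb => /eqP zu; move: uz; rewrite zu eqxx.
by have [h _] := noUZ hM eM; rewrite !inE eqxx in h.
Qed.

Lemma match_rem (M : {set {set T}}) : matching_in adj S (e0 |: M) -> e0 \notin M ->
  matching_in adj (S :\ u :\ z) M.
Proof.
case/matchingP => h1 h2 nM; apply/matchingP; split; last first.
  by move=> e f eM fM; apply: h2; apply: setU1r.
move=> e eM; have eM' : e \in e0 |: M by apply: setU1r.
have ne : e0 != e by apply: contraNneq nM => ->.
have dj := h2 _ _ (setU11 _ _) eM' ne.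
case/edgeP: (h1 e eM') => x [y [xS yS axy ee]].
have notin t : t \in e -> t \notin e0.
  move=> te; apply/negP => t0; move/pred0P: dj => /(_ t) /=; by rewrite t0 te.
have hx : x \notin e0 by apply: notin; rewrite ee !inE eqxx.
have hy : y \notin e0 by apply: notin; rewrite ee !inE eqxx orbT.
rewrite !inE in hx hy.
apply/edgeP; exists x, y; split => //; rewrite !in_setD1 ?xS ?yS !andbT.
- by move: hx; rewrite negb_or => /andP [a b]; rewrite b a.
- by move: hy; rewrite negb_or => /andP [a b]; rewrite b a.
Qed.
End Fixz.
End Conc2.
Section Conc3.
Variables (R : rcfType) (T : finType) (adj : rel T).
Variables (w : {set T} -> R[i]) (w1 : T -> R).
Hypothesis sym : symmetric adj.
Hypothesis irr : irreflexive adj.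

Definition Fm (S : {set T}) (M : {set {set T}}) : {poly R[i]} :=
  ((-1) ^+ #|M| * `|wM w M| ^+ 2) *: 'X^(#|S| - 2 * #|M|).

Lemma ar_c1 n a b : n = (1 + a)%N -> (b <= a)%N -> (n - b = (a - b).+1)%N.
Proof. lia. Qed.
Lemma ar_c2 n a b : n = (a + 2)%N -> (2 * b <= a)%N -> (n - 2 * b.+1 = a - 2 * b)%N.
Proof. lia. Qed.

Lemma scal_alg (K : comNzRingType) (a b : K) n :
  (-1) ^+ n.+1 * (a * b) = - (a * ((-1) ^+ n * b)).
Proof. rewrite exprS; ring. Qed.

Lemma mu_rec (S : {set T}) u : u \in S -> mu_w adj w S =
  'X * mu_w adj w (S :\ u) -
  \sum_(z in S :\ u | adj u z) (`|w [set u; z]| ^+ 2) *: mu_w adj w (S :\ u :\ z).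
Proof.
move=> uS; rewrite /mu_w (bigID (fun M => u \in cover M)) /= addrC.
congr (_ + _).
  rewrite mulr_sumr; apply: eq_big => M; first exact: match_noU.
  rewrite match_noU // => hM.
  rewrite -scalerAr -exprS; congr (_ *: _); congr ('X ^+ _).
  by apply: ar_c1; [rewrite (cardsD1 u S) uS | apply: (matching_card irr hM)].
rewrite (partition_big (pM u) (fun z => (z \in S :\ u) && adj u z)); last first.
  by move=> M /andP [hM uc]; have [_ -> ->] := pM_spec sym irr hM uc.
rewrite -sumrN; apply: eq_bigr => z /andP [zS az].
have uz : u != z by apply: (uz zS).
rewrite scaler_sumr -sumrN.
rewrite (reindex_onto (fun M' => [set u; z] |: M') (fun M => M :\ [set u; z])) /=; last first.
  move=> M /andP [/andP [hM uc] /eqP pz]; have [h _ _] := pM_spec sym irr hM uc.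
  by rewrite setD1K // -pz.
have predE : forall M', ((matching_in adj S ([set u; z] |: M') && (u \in cover ([set u; z] |: M')))
    && (pM u ([set u; z] |: M') == z)) && (([set u; z] |: M') :\ [set u; z] == M')
    = matching_in adj (S :\ u :\ z) M'.
  move=> M'; apply/idP/idP.
    case/andP => /andP [/andP [hm _] _] /eqP E.
    apply: match_rem hm _; apply/negP => inM.
    by move: (setD11 [set u; z] ([set u; z] |: M')); rewrite E inM.
  move=> hm; rewrite (match_add uS zS az hm) (pM_add zS hm) eqxx.
  rewrite setU1K ?(e0_notin hm) // eqxx !andbT.
  by apply/bigcupP; exists [set u; z]; [exact: setU11 | rewrite !inE eqxx].
apply: eq_big => M'; first exact: predE.
rewrite predE => hm.
have nM := e0_notin hm.
rewrite cardsU1 nM /= add1n /wM big_setU1 //= normrM exprMn.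
rewrite scalerA -scaleNr; congr (_ *: _); first exact: scal_alg.
congr ('X ^+ _); apply: ar_c2; last exact: (matching_card irr hm).
move: zS; rewrite in_setD1 => /andP [zu zS].
rewrite (cardsD1 u S) uS (cardsD1 z (S :\ u)) in_setD1 zu zS.
by rewrite /= !add1n addn2.
Qed.
End Conc3.
Section Conc4.
Variables (R : rcfType) (T : finType) (adj : rel T).
Variables (w : {set T} -> R[i]) (w1 : T -> R).
Hypothesis sym : symmetric adj.
Hypothesis irr : irreflexive adj.

Definition cf (A B : {set T}) : R[i] :=
  (-1) ^+ #|A :\: B| * \prod_(y in A :\: B) (w1 y)%:C.

Lemma eta_cf (S : {set T}) : eta_w adj w w1 S = \sum_(B : {set T} | B \subset S) cf S B *: mu_w adj w B.
Proof. by []. Qed.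

Lemma cf_out (A B : {set T}) a : a \in A -> B \subset A :\ a ->
  cf A B = - (w1 a)%:C * cf (A :\ a) B.
Proof.
move=> aA sB.
have aB : a \notin B by move: (subsetP sB a); rewrite setD11; case: (a \in B) => //; move/(_ isT).
have E : A :\: B = a |: ((A :\ a) :\: B).
  apply/setP => t; rewrite !inE; case: eqP => [->|] //=; by rewrite aA (negbTE aB).
have na : a \notin (A :\ a) :\: B by rewrite !inE eqxx /= andbF.
rewrite /cf E cardsU1 na big_setU1 //= add1n exprS.
move: ((-1) ^+ _) (\prod_(_ in _) _) ((w1 a)%:C) => X Y Z; ring.
Qed.

Lemma cf_in (A B : {set T}) a : cf A (a |: B) = cf (A :\ a) B.
Proof. by rewrite /cf setDDl. Qed.

Lemma sum_with (A : {set T}) a (G : {set T} -> {poly R[i]}) : a \in A ->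
  \sum_(B : {set T} | (B \subset A) && (a \in B)) G B =
  \sum_(B : {set T} | B \subset A :\ a) G (a |: B).
Proof.
move=> aA.
rewrite (reindex_onto (fun B => a |: B) (fun B => B :\ a)) /=; last first.
  by move=> B /andP [_ aB]; rewrite setD1K.
apply: eq_bigl => B; rewrite setU11 andbT subsetD1.
apply/idP/idP.
  case/andP => sub /eqP E.
  have aB : a \notin B by rewrite -E setD11.
  rewrite aB andbT; apply: subset_trans sub; exact: subsetUr.
case/andP => sub aB; rewrite setU1K // eqxx andbT.
by rewrite subUset sub1set aA.
Qed.

Lemma sum_split (A : {set T}) a (G : {set T} -> {poly R[i]}) : a \in A ->
  \sum_(B : {set T} | B \subset A) G B =
  \sum_(B : {set T} | B \subset A :\ a) G B + \sum_(B : {set T} | B \subset A :\ a) G (a |: B).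
Proof.
move=> aA; rewrite (bigID (fun B : {set T} => a \in B)) /= addrC sum_with //.
congr (_ + _); apply: eq_bigl => B; by rewrite subsetD1.
Qed.

Lemma eta_rec (S : {set T}) u : u \in S -> eta_w adj w w1 S =
  ('X - ((w1 u)%:C)%:P) * eta_w adj w w1 (S :\ u) -
  \sum_(z in S :\ u | adj u z) (`|w [set u; z]| ^+ 2) *: eta_w adj w w1 (S :\ u :\ z).
Proof.
move=> uS; set H := S :\ u.
rewrite eta_cf (sum_split _ uS) -/H.
have E1 : \sum_(B : {set T} | B \subset H) cf S B *: mu_w adj w B
    = - ((w1 u)%:C)%:P * eta_w adj w w1 H.
  rewrite eta_cf mulr_sumr; apply: eq_bigr => B sB.
  by rewrite (cf_out uS sB) -scalerA mulNr mul_polyC scaleNr.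
have E2 : \sum_(B : {set T} | B \subset H) cf S (u |: B) *: mu_w adj w (u |: B)
    = 'X * eta_w adj w w1 H -
      \sum_(B : {set T} | B \subset H) \sum_(z in B | adj u z)
         cf H B *: (`|w [set u; z]| ^+ 2 *: mu_w adj w (B :\ z)).
  rewrite eta_cf mulr_sumr -sumrB; apply: eq_bigr => B sB.
  have uB : u \notin B by move: (subsetP sB u); rewrite setD11; case: (u \in B) => //; move/(_ isT).
  rewrite cf_in (mu_rec w sym irr (setU11 u B)) setU1K // scalerBr scalerAr.
  by congr (_ - _); rewrite scaler_sumr.
rewrite E1 E2.
have E3 : \sum_(B : {set T} | B \subset H) \sum_(z in B | adj u z)
         cf H B *: (`|w [set u; z]| ^+ 2 *: mu_w adj w (B :\ z))
   = \sum_(z in H | adj u z) `|w [set u; z]| ^+ 2 *: eta_w adj w w1 (H :\ z).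
  rewrite (exchange_big_dep (fun z => (z \in H) && adj u z)) /=; last first.
    by move=> B z sB /andP [zB ->]; rewrite (subsetP sB z zB).
  apply: eq_bigr => z /andP [zH az].
  rewrite eta_cf scaler_sumr.
  rewrite (eq_bigl (fun B : {set T} => (B \subset H) && (z \in B))); last first.
    by move=> B; rewrite az andbT.
  rewrite sum_with //; apply: eq_bigr => B sB.
  have zB : z \notin B by move: (subsetP sB z); rewrite setD11; case: (z \in B) => //; move/(_ isT).
  by rewrite cf_in setU1K // !scalerA mulrC.
rewrite E3 mulrBl addrA; congr (_ - _).
by rewrite mulNr addrC.
Qed.
End Conc4.
Section Fin.
Variables (R : rcfType) (T : finType) (adj : rel T).
Variables (w : {set T} -> R[i]) (w1 : T -> R).
Hypothesis sym : symmetric adj.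
Hypothesis irr : irreflexive adj.

Local Notation RC := (real_complex R).
Local Notation eta := (eta_w adj w w1).

Lemma match0 (M : {set {set T}}) : matching_in adj set0 M = (M == set0).
Proof.
apply/idP/idP.
  case/matchingP => h1 _; apply/eqP/setP => e; rewrite inE; apply/negP => eM.
  have h := h1 e eM; have := edge_card irr h.
  by have /subset_leq_card := edge_sub h; rewrite cards0 leqn0 => /eqP ->.
move/eqP ->; apply/matchingP; split => e; by rewrite inE.
Qed.

Lemma eta0 : eta set0 = 1.
Proof.
rewrite /eta_w (eq_bigl (fun B : {set T} => B == set0)); last by move=> B; rewrite subset0.
rewrite big_pred1_eq /mu_w.
rewrite (eq_bigl (fun M : {set {set T}} => M == set0)); last by move=> M; rewrite match0.
rewrite big_pred1_eq setDv !cards0 big_set0 /wM big_set0 /= normr1 expr1n.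
by rewrite !mulr1 !scale1r expr0.
Qed.

Lemma normsq_real (x : R[i]) : `|x| ^+ 2 = (complex.Re (`|x| ^+ 2))%:C.
Proof.
have := ger0_Im (exprn_ge0 2 (normr_ge0 x)); set y := `|x| ^+ 2 => hy.
by rewrite {1}[y]complexE hy rmorph0 mulr0 addr0.
Qed.

Definition cc u z := complex.Re (`|w [set u; z]| ^+ 2).

Lemma cc_pos : edge_weight_ok adj w -> forall x y, adj x y -> 0 < cc x y.
Proof.
move=> ok x y axy; have w0 := ok x y axy.
have : 0 < `|w [set x; y]| ^+ 2 by rewrite exprn_gt0 // normr_gt0.
by rewrite ltcE => /andP [_].
Qed.

Definition P (S : {set T}) : {poly R} := map_poly (@complex.Re R) (eta S).

Lemma ReK (q : {poly R}) : map_poly (@complex.Re R) (map_poly RC q) = q.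
Proof. by apply/polyP => i; rewrite coef_map_id0 // coef_map. Qed.

Lemma Re1 : map_poly (@complex.Re R) 1 = 1.
Proof. by apply/polyP => i; rewrite coef_map_id0 // !coef1; case: (i == 0%N). Qed.

Lemma etaP (S : {set T}) : eta S = map_poly RC (P S).
Proof.
move: {2}#|S| (leqnn #|S|) => n; elim: n S => [|n IH] S.
  rewrite leqn0 cards_eq0 => /eqP ->; by rewrite /P eta0 Re1 rmorph1.
move=> hS; case: (eqVneq S set0) => [->|/set0Pn [u uS]].
  by rewrite /P eta0 Re1 rmorph1.
have hH : (#|S :\ u| <= n)%N by move: hS; rewrite (cardsD1 u S) uS add1n ltnS.
set Q := ('X - (w1 u)%:P) * P (S :\ u) - \sum_(z in S :\ u | adj u z) cc u z *: P (S :\ u :\ z).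
have E : eta S = map_poly RC Q.
  rewrite (eta_rec w w1 sym irr uS) rmorphB rmorphM /= map_polyXsubC rmorph_sum /=.
  rewrite -(IH _ hH); congr (_ - _); apply: eq_bigr => z /andP [zH _].
  rewrite map_polyZ /= -IH; first by rewrite /cc -normsq_real.
  apply: leq_trans hH; rewrite (cardsD1 z (S :\ u)) zH; exact: leq_addl.
by rewrite /P E ReK.
Qed.

Lemma P_rec (S : {set T}) u : u \in S -> P S =
  ('X - (w1 u)%:P) * P (S :\ u) - \sum_(z in S :\ u | adj u z) cc u z *: P (S :\ u :\ z).
Proof.
move=> uS; apply: (@map_inj_poly _ _ RC); [exact: complexI | by [] |].
rewrite -etaP (eta_rec w w1 sym irr uS) rmorphB rmorphM /= map_polyXsubC rmorph_sum /=.
rewrite -etaP; congr (_ - _); apply: eq_bigr => z _.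
by rewrite map_polyZ /= -etaP /cc -normsq_real.
Qed.

Lemma P_size (S : {set T}) : size (P S) = #|S|.+1.
Proof.
move: {2}#|S| (leqnn #|S|) => n; elim: n S => [|n IH] S.
  rewrite leqn0 cards_eq0 => /eqP ->; by rewrite /P eta0 cards0 Re1 size_poly1.
move=> hS; case: (eqVneq S set0) => [->|/set0Pn [u uS]].
  by rewrite /P eta0 cards0 Re1 size_poly1.
have hH : (#|S :\ u| <= n)%N by move: hS; rewrite (cardsD1 u S) uS add1n ltnS.
have cS : #|S| = #|S :\ u|.+1 by rewrite (cardsD1 u S) uS.
rewrite (P_rec uS) cS.
have PH0 : P (S :\ u) != 0 by rewrite -size_poly_gt0 (IH _ hH).
have s1 : size (('X - (w1 u)%:P) * P (S :\ u)) = #|S :\ u|.+2.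
  by rewrite size_mul ?polyXsubC_eq0 // size_XsubC (IH _ hH).
have s2 : (size (\sum_(z in S :\ u | adj u z) cc u z *: P (S :\ u :\ z))%R <= #|S :\ u|)%N.
  apply: (big_ind (fun q : {poly R} => size q <= #|S :\ u|)%N) => //.
    by rewrite size_poly0.
    by move=> x y hx hy; apply: (leq_trans (size_polyD _ _)); rewrite geq_max hx hy.
  move=> z /andP [zH _]; apply: leq_trans (size_scale_leq _ _) _.
  rewrite IH; first by rewrite (cardsD1 z (S :\ u)) zH.
  apply: leq_trans hH; rewrite (cardsD1 z (S :\ u)) zH; exact: leq_addl.
rewrite size_polyDl; first by rewrite s1.
by rewrite size_polyN s1 ltnS; apply: (leq_trans s2); exact: leqnSn.
Qed.

Lemma P_neq0 (S : {set T}) : P S != 0.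
Proof. by rewrite -size_poly_gt0 P_size. Qed.

Lemma mup_map (x : R) (q : {poly R}) : q != 0 ->
  mup (x%:C) (map_poly RC q) = mup x q.
Proof.
move=> q0; have qC0 : map_poly RC q != 0 by rewrite map_poly_eq0.
apply/eqP; rewrite eqn_leq; apply/andP; split.
  rewrite mup_leq // -(map_polyXsubC (real_complex R)) -rmorphXn dvdp_map.
  by rewrite -mup_leq.
rewrite mup_geq // -(map_polyXsubC (real_complex R)) -rmorphXn dvdp_map.
by rewrite -mup_geq.
Qed.

Lemma mult_eq theta (S : {set T}) : mult adj w w1 theta S = mup theta (P S).
Proof. by rewrite /mult etaP mup_map // P_neq0. Qed.
End Fin.

Theorem lemma5p1 (R : rcfType) (T : finType) (adj : rel T)
  (w : {set T} -> R[i]) (w1 : T -> R) (theta : R) (u : T) :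
  simple_graph adj -> edge_weight_ok adj w ->
  special adj w w1 theta [set: T] u ->
  positive adj w w1 theta [set: T] u.
Proof.
move=> [sym irr] ok [uS [nes [v [vS auv] [_ ess]]]].
split => //.
rewrite !(mult_eq w w1 sym irr) in ess nes *.
apply: (@special_positive R T adj (P adj w w1) w1 (cc w) theta irr
          (cc_pos ok) (P_rec w w1 sym irr) (P_neq0 w w1 sym irr) _ u v uS vS auv ess).
apply/eqP => h; apply: nes; split => //.
by rewrite !(mult_eq w w1 sym irr).
Qed.
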